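(* Let $\Lambda$ be a lattice of rank $n$, $U=\Lambda\otimes\mathbb{R}$, and let $X\subset\Lambda$ be a linearly independent list forming a basis of $U$. For $A\subseteq X$ let $h(A)$ be the number of points of $\Lambda$ that are internal to the face $\mathcal{Z}(A)$ of the parallelepiped $\mathcal{Z}(X)$. Then for every $A\subseteq X$, $$h(A)=\sum_{B\subseteq A}(-1)^{|A|-|B|}m(B).$$
   Context: For a list $Y$, $\mathcal{Z}(Y)=\{\sum_{y\in Y}t_y y: 0\le t_y\le 1\}$; when $X$ is a basis, $\mathcal{Z}(X)$ is a parallelepiped and $\mathcal{Z}(A)$ is a face of it for each $A\subseteq X$ ($\mathcal{Z}(\emptyset)=\{0\}$). A point $p\in\Lambda\cap\mathcal{Z}(X)$ is internal to a face $F$ of $\mathcal{Z}(X)$ if $F$ is the smallest face of $\mathcal{Z}(X)$ containing $p$. For $B\subseteq X$, $m(B)=[\Lambda\cap\langle B\rangle_{\mathbb{R}}:\langle B\rangle_{\mathbb{Z}}]$, where $\langle B\rangle_{\mathbb{R}}$ and $\langle B\rangle_{\mathbb{Z}}$ are the real span and the subgroup generated by $B$. *)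

(* Defs.v *)
From HB Require Import structures.
From mathcomp Require Import all_boot all_order all_algebra.
From mathcomp Require Import reals.
Set Implicit Arguments. Unset Strict Implicit. Unset Printing Implicit Defensive.
Import Order.TTheory GRing.Theory Num.Theory.
Local Open Scope ring_scope.

Section Defs.
Variables (R : realType) (n : nat).

(* The lattice Lambda = { z *m L : z integer row vector }, L invertible;
   U = Lambda (x) R is identified with 'rV[R]_n. *)
Definition inLat (L : 'M[R]_n) (v : 'rV[R]_n) : Prop :=
  exists z : 'rV[int]_n, v = map_mx (fun k : int => k%:~R) z *m L.

Definition dotr (u v : 'rV[R]_n) : R := (u *m v^T) 0 0.

Definition Zono (X : 'I_n -> 'rV[R]_n) (A : {set 'I_n}) (p : 'rV[R]_n) : Prop :=
  exists t : 'I_n -> R, (forall i, 0 <= t i <= 1) /\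
    p = \sum_(i in A) t i *: X i.

Definition isFace (X : 'I_n -> 'rV[R]_n) (F : 'rV[R]_n -> Prop) : Prop :=
  exists w : 'rV[R]_n, forall p,
    F p <-> (Zono X setT p /\ forall q, Zono X setT q -> dotr q w <= dotr p w).

(* p is internal to the face Z(A): Z(A) is the smallest face containing p *)
Definition internal (X : 'I_n -> 'rV[R]_n) (A : {set 'I_n}) (p : 'rV[R]_n) : Prop :=
  isFace X (Zono X A) /\ Zono X A p /\
  forall F, isFace X F -> F p -> forall q, Zono X A q -> F q.

Definition realSpan (X : 'I_n -> 'rV[R]_n) (B : {set 'I_n}) (v : 'rV[R]_n) : Prop :=
  exists t : 'I_n -> R, v = \sum_(i in B) t i *: X i.

Definition intSpan (X : 'I_n -> 'rV[R]_n) (B : {set 'I_n}) (v : 'rV[R]_n) : Prop :=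
  exists t : 'I_n -> int, v = \sum_(i in B) (t i)%:~R *: X i.

Definition group_index (G H : 'rV[R]_n -> Prop) (k : nat) : Prop :=
  exists s : seq 'rV[R]_n,
    [/\ size s = k, uniq s, (forall x, x \in s -> G x),
        (forall x y, x \in s -> y \in s -> H (x - y) -> x = y) &
        (forall g, G g -> exists2 x, x \in s & H (g - x))].

Definition m_index (L : 'M[R]_n) (X : 'I_n -> 'rV[R]_n) (B : {set 'I_n}) (k : nat) : Prop :=
  group_index (fun v => inLat L v /\ realSpan X B v) (intSpan X B) k.

End Defs.

(* Main.v *)
Require Import Defs.
From HB Require Import structures.
From mathcomp Require Import all_boot all_order all_algebra.
From mathcomp Require Import reals.
From mathcomp Require Import zify ring lra.
Import Order.TTheory GRing.Theory Num.Theory.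
Local Open Scope ring_scope.

Lemma sgn_sum (T : finType) (S A : {set T}) :
  \sum_(B : {set T} | (B \subset A) && (S \subset B)) (-1) ^+ (#|A| - #|B|)%N
  = (nat_of_bool (S == A))%:Z :> int.
Proof.
case: (boolP (S \subset A)) => hSA; last first.
  rewrite big_pred0; last first.
    by move=> B; apply/negP => /andP[h1 h2]; rewrite (subset_trans h2 h1) in hSA.
  by case: eqP => // e; rewrite e subxx in hSA.
case: (eqVneq S A) => [->|hne].
  rewrite (eq_bigl (fun B => B == A)); last by move=> B; rewrite eqEsubset.
  by rewrite big_pred1_eq subnn expr0.
have : S \proper A by rewrite properEneq hne hSA.
case/properP => _ [t htA htS].
pose phi (B : {set T}) := if t \in B then B :\ t else t |: B.
have phiK : involutive phi.
  move=> B; rewrite /phi; case: (boolP (t \in B)) => hB.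
    by rewrite !inE eqxx /= setD1K.
  by rewrite !inE eqxx /= setU1K.
pose P (B : {set T}) := (B \subset A) && (S \subset B).
have hP : forall B, P (phi B) = P B.
  move=> B; rewrite /P /phi; case: (boolP (t \in B)) => hB.
    apply/idP/idP.
      move/andP=> [/subsetP h1 /subsetP h2]; apply/andP; split; apply/subsetP => y hy.
        case: (eqVneq y t) => [->//|hyt]; apply: h1; by rewrite in_setD1 hyt.
      by have := h2 y hy; rewrite in_setD1 => /andP[].
    move/andP=> [/subsetP h1 /subsetP h2]; apply/andP; split; apply/subsetP => y hy.
      by apply: h1; move: hy; rewrite in_setD1 => /andP[].
    rewrite in_setD1 h2 // andbT; apply/eqP => e; by rewrite -e hy in htS.
  apply/idP/idP.
    move/andP=> [/subsetP h1 /subsetP h2]; apply/andP; split; apply/subsetP => y hy.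
      by apply: h1; rewrite in_setU1 hy orbT.
    have := h2 y hy; rewrite in_setU1 => /orP[/eqP e|//]; by rewrite -e hy in htS.
  move/andP=> [/subsetP h1 /subsetP h2]; apply/andP; split; apply/subsetP => y hy.
    move: hy; rewrite in_setU1 => /orP[/eqP ->//|]; exact: h1.
  by rewrite in_setU1 h2 ?orbT.
have hF : forall B, P B -> (-1) ^+ (#|A| - #|phi B|)%N = - (-1) ^+ (#|A| - #|B|)%N :> int.
  move=> B /andP[hBA hSB]; have hc := subset_leq_card hBA; rewrite /phi.
  case: (boolP (t \in B)) => hB.
    have := cardsD1 t B; rewrite hB => e1.
    have -> : (#|A| - #|B :\ t| = (#|A| - #|B|).+1)%N by lia.
    by rewrite exprS mulN1r.
  have := cardsU1 t B; rewrite hB => e1.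
  have hlt : (#|B| < #|A|)%N.
    by apply: proper_card; apply/properP; split => //; exists t.
  have -> : (#|A| - #|B|)%N = (#|A| - #|t |: B|).+1 by lia.
  by rewrite exprS mulN1r opprK.
set s := \sum_(B | _) _.
have : s = - s.
  rewrite {1}/s (reindex_inj (can_inj phiK)) /= -sumrN.
  apply: eq_big => [B|B hB]; first exact: hP.
  have hB' : P B by rewrite -hP. exact: (hF B hB').
move=> e; suff -> : s = 0 by []. lia.
Qed.

Section Aux.
Variables (R : realType) (n : nat) (L : 'M[R]_n) (X : 'I_n -> 'rV[R]_n).
Hypotheses (HL : L \in unitmx) (HX : forall i, inLat L (X i))
  (HM : row_free (\matrix_(i < n) X i)).

Let M := \matrix_(i < n) X i.
Lemma Munit : M \in unitmx. Proof. by rewrite -row_free_unit. Qed.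
Definition coord_def (p : 'rV[R]_n) := p *m invmx M.
Fact coord_key : unit. Proof. exact: tt. Qed.
Definition coord := locked_with coord_key coord_def.
Lemma coordE p : coord p = p *m invmx M. Proof. by rewrite /coord unlock. Qed.
Lemma coordK p : coord p *m M = p. Proof. by rewrite coordE mulmxKV // Munit. Qed.
Lemma coordM c : coord (c *m M) = c. Proof. by rewrite coordE mulmxK // Munit. Qed.

Lemma sumX (A : {set 'I_n}) (t : 'I_n -> R) :
  \sum_(i in A) t i *: X i = (\row_i (if i \in A then t i else 0)) *m M.
Proof.
rewrite mulmx_sum_row big_mkcond /=; apply: eq_bigr => i _.
by rewrite mxE rowK; case: ifP => _ //; rewrite scale0r.
Qed.

Lemma coord_sum (A : {set 'I_n}) (t : 'I_n -> R) : coord (\sum_(i in A) t i *: X i) = \row_i (if i \in A then t i else 0).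
Proof. by rewrite sumX coordM. Qed.

Lemma coordX i : coord (X i) = \row_j (if j == i then 1 else 0).
Proof.
have -> : X i = row i M by rewrite /M rowK.
rewrite rowE coordM; apply/rowP => j.
by rewrite !mxE eqxx /=; case: (j == i).
Qed.

Lemma coordD p q : coord (p + q) = coord p + coord q. Proof. by rewrite !coordE mulmxDl. Qed.
Lemma coordB p q : coord (p - q) = coord p - coord q. Proof. by rewrite !coordE mulmxBl. Qed.
Lemma coord0 : coord 0 = 0. Proof. by rewrite coordE mul0mx. Qed.

Lemma coord_inj p q : coord p = coord q -> p = q.
Proof. by move=> h; rewrite -(coordK p) h coordK. Qed.

Lemma ZonoP (A : {set 'I_n}) p : Zono X A p <->
  forall i, (i \in A -> 0 <= coord p 0 i <= 1) /\ (i \notin A -> coord p 0 i = 0).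
Proof.
split.
  move=> [t [ht ->]] i; rewrite coord_sum mxE; split => hi; first by rewrite hi.
  by rewrite (negPf hi).
move=> h; exists (fun i => coord p 0 i); split.
  move=> i; case: (boolP (i \in A)) => hi; first by case: (h i) => /(_ hi).
  by case: (h i) => _ /(_ hi) ->; rewrite lexx ler01.
apply: coord_inj; rewrite (coord_sum A (fun i => coord p 0 i)); apply/rowP => i; rewrite mxE.
by case: ifP => // /negbT hi; case: (h i) => _ /(_ hi).
Qed.

Lemma realSpanP (B : {set 'I_n}) v : realSpan X B v <-> forall i, i \notin B -> coord v 0 i = 0.
Proof.
split.
  by move=> [t ->] i hi; rewrite coord_sum mxE (negPf hi).
move=> h; exists (fun i => coord v 0 i); apply: coord_inj; rewrite (coord_sum B (fun i => coord v 0 i)).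
apply/rowP => i; rewrite mxE; case: ifP => // /negbT hi; exact: h.
Qed.

Lemma dotrE p w : dotr p w = \sum_i coord p 0 i * (w *m M^T) 0 i.
Proof.
rewrite /dotr -{1}(coordK p) -mulmxA -[M *m w^T]trmxK trmx_mul trmxK mxE.
by apply: eq_bigr => i _; rewrite mxE.
Qed.

Definition wb (b : 'rV[R]_n) := b *m invmx M^T.
Lemma wbK b : wb b *m M^T = b.
Proof. by rewrite /wb mulmxKV // unitmx_tr Munit. Qed.


Lemma ZTP p : Zono X setT p <-> forall i, 0 <= coord p 0 i <= 1.
Proof.
split => [/ZonoP h i|h]; first by case: (h i) => /(_ (in_setT i)).
apply/ZonoP => i; split => [_|]; [exact: h|by rewrite in_setT].
Qed.

Lemma dotr_wb p b : dotr p (wb b) = \sum_i coord p 0 i * b 0 i.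
Proof. by rewrite dotrE wbK. Qed.

Lemma sum_upd (c b : 'rV[R]_n) i x :
  \sum_j (\row_k (if k == i then x else c 0 k)) 0 j * b 0 j
  = \sum_j c 0 j * b 0 j + (x - c 0 i) * b 0 i.
Proof.
rewrite (bigD1 i) //= [in RHS](bigD1 i) //= mxE eqxx.
rewrite (eq_bigr (fun j => c 0 j * b 0 j)); last first.
  by move=> j /negPf hj; rewrite mxE hj.
rewrite mulrBl; lra.
Qed.

Lemma sum_e (c : 'rV[R]_n) i x :
  \sum_j c 0 j * (\row_k (if k == i then x else 0)) 0 j = c 0 i * x.
Proof.
rewrite (bigD1 i) //= mxE eqxx big1 ?addr0 // => j /negPf hj.
by rewrite mxE hj mulr0.
Qed.

Lemma ZT0 : Zono X setT 0.
Proof. by apply/ZTP => i; rewrite coord0 mxE lexx ler01. Qed.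

Lemma ZTX i : Zono X setT (X i).
Proof. apply/ZTP => j; rewrite coordX mxE; case: ifP => _; rewrite ?lexx ?ler01 //. Qed.

Lemma face_Zono (A : {set 'I_n}) : isFace X (Zono X A).
Proof.
pose b : 'rV[R]_n := \row_i (if i \in A then 0 else -1).
have key : forall q, Zono X setT q -> dotr q (wb b) <= 0.
  move=> q /ZTP hq; rewrite dotr_wb; apply: sumr_le0 => i _; rewrite mxE.
  case: ifP => _; first by rewrite mulr0.
  by rewrite mulrN1 oppr_le0; case/andP: (hq i).
exists (wb b) => p; split.
  move=> /ZonoP hp; have hpT : Zono X setT p.
    apply/ZTP => i; case: (hp i) => h1 h2.
    by case: (boolP (i \in A)) => hi; [exact: h1|rewrite h2 // lexx ler01].
  split => // q hq.
  have -> : dotr p (wb b) = 0.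
    rewrite dotr_wb big1 // => i _; rewrite mxE; case: ifP => hi; first by rewrite mulr0.
    by case: (hp i) => _ ->; rewrite ?hi // mul0r.
  exact: key.
move=> [hpT hmax]; have := hmax 0 ZT0.
rewrite (dotr_wb 0) coord0 big1; last by move=> i _; rewrite mxE mul0r.
move=> hge; apply/ZonoP => i; split => hi; first by move/ZTP: hpT => /(_ i).
have hF : forall j, coord p 0 j * b 0 j <= 0.
  move=> j; rewrite mxE; case: ifP => _; first by rewrite mulr0.
  by rewrite mulrN1 oppr_le0; move/ZTP: hpT => /(_ j) /andP[].
move: hge; rewrite dotr_wb (bigD1 i) //=.
have : \sum_(j | j != i) coord p 0 j * b 0 j <= 0 by apply: sumr_le0 => j _.
rewrite mxE (negPf hi) mulrN1.
move/ZTP: hpT => /(_ i) /andP[h0 _]; lra.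
Qed.


Lemma Zono_T (A : {set 'I_n}) x : Zono X A x -> Zono X setT x.
Proof.
move/ZonoP=> h; apply/ZTP => i; case: (h i) => h1 h2.
by case: (boolP (i \in A)) => hi; [exact: h1|rewrite h2 // lexx ler01].
Qed.

Definition faceW (w : 'rV[R]_n) (x : 'rV[R]_n) : Prop :=
  Zono X setT x /\ forall q, Zono X setT q -> dotr q w <= dotr x w.

Lemma isFace_W w : isFace X (faceW w).
Proof. by exists w. Qed.

Lemma internalP (A : {set 'I_n}) p : internal X A p <->
  forall i, (i \in A -> 0 < coord p 0 i < 1) /\ (i \notin A -> coord p 0 i = 0).
Proof.
split.
  move=> [_ [hZ hmin]]; have hT := (@Zono_T _ _ hZ); move/ZonoP: (hZ) => hZ' i.
  split; last by case: (hZ' i).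
  move=> hi; case: (hZ' i) => /(_ hi) /andP[h0 h1] _.
  have c0 : coord p 0 i != 0.
    apply/negP => /eqP hc.
    pose b : 'rV[R]_n := \row_k (if k == i then -1 else 0).
    have Fp : faceW (wb b) p.
      split => // q /ZTP hq; rewrite !dotr_wb !sum_e hc.
      by case/andP: (hq i) => hq0 _; lra.
    have ZXi : Zono X A (X i).
      apply/ZonoP => j; rewrite coordX mxE; split => hj.
        by case: ifP => _; rewrite ?lexx ?ler01.
      by case: eqP hj => // ->; rewrite hi.
    case: (hmin _ (isFace_W (wb b)) Fp (X i) ZXi) => _ /(_ 0 ZT0).
    by rewrite !dotr_wb !sum_e coord0 coordX !mxE eqxx; lra.
  have c1 : coord p 0 i != 1.
    apply/negP => /eqP hc.
    pose b : 'rV[R]_n := \row_k (if k == i then 1 else 0).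
    have Fp : faceW (wb b) p.
      split => // q /ZTP hq; rewrite !dotr_wb !sum_e hc.
      by case/andP: (hq i) => _ hq1; lra.
    have Z0 : Zono X A 0.
      by apply/ZonoP => j; rewrite coord0 mxE lexx ler01.
    case: (hmin _ (isFace_W (wb b)) Fp 0 Z0) => _ /(_ (X i) (ZTX i)).
    by rewrite !dotr_wb !sum_e coord0 coordX !mxE eqxx; lra.
  by rewrite lt_neqAle eq_sym c0 h0 /= lt_neqAle c1 h1.
move=> h.
have Zp : Zono X A p.
  apply/ZonoP => i; case: (h i) => h1 h2; split => // hi.
  by case/andP: (h1 hi) => a b; rewrite !le_eqVlt a b !orbT.
split; [exact: face_Zono | split; first exact: Zp].
move=> F [w Hw] Fp q hq; have [hpT hmax] := (Hw p).1 Fp; apply/Hw.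
pose b := w *m M^T.
have hb : forall i, i \in A -> b 0 i = 0.
  move=> i hi; case: (h i) => /(_ hi) /andP[c0 c1] _.
  pose c := coord p.
  have r1T : Zono X setT ((\row_k (if k == i then 0 else c 0 k)) *m M).
    apply/ZTP => j; rewrite coordM mxE; case: ifP => _; first by rewrite lexx ler01.
    by move/ZTP: hpT.
  have r2T : Zono X setT ((\row_k (if k == i then 1 else c 0 k)) *m M).
    apply/ZTP => j; rewrite coordM mxE; case: ifP => _; first by rewrite lexx ler01.
    by move/ZTP: hpT.
  have := hmax _ r1T; have := hmax _ r2T.
  rewrite !dotrE !coordM !sum_upd -/b -/c => e2 e1.
  have g1 : 0 <= c 0 i * b 0 i by lra.
  have g2 : (1 - c 0 i) * b 0 i <= 0 by lra.
  rewrite pmulr_rge0 // in g1; rewrite pmulr_rle0 in g2; last by lra.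
  lra.
have zero : forall x, Zono X A x -> dotr x w = 0.
  move=> x /ZonoP hx; rewrite dotrE big1 // => j _.
  case: (boolP (j \in A)) => hj; first by rewrite -/b hb // mulr0.
  by case: (hx j) => _ ->; rewrite ?mul0r.
split; first exact: (@Zono_T _ _ hq).
by move=> r hr; rewrite (zero q hq) -(zero p Zp); exact: hmax.
Qed.


Notation fI := (fun k : int => (k%:~R : R)).

Lemma inLat0 : inLat L 0.
Proof. exists 0; apply/rowP => j; rewrite mxE (_ : map_mx fI 0 = 0) ?mul0mx ?mxE //.
by apply/matrixP => a b; rewrite !mxE. Qed.

Lemma inLatD u v : inLat L u -> inLat L v -> inLat L (u + v).
Proof.
move=> [zu ->] [zv ->]; exists (zu + zv); rewrite -mulmxDl; congr (_ *m _).
by apply/matrixP => a b; rewrite !mxE intrD.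
Qed.

Lemma inLatN v : inLat L v -> inLat L (- v).
Proof.
move=> [z ->]; exists (- z); rewrite -mulNmx; congr (_ *m _).
by apply/matrixP => a b; rewrite !mxE intrN.
Qed.

Lemma inLatZ (k : int) v : inLat L v -> inLat L (k%:~R *: v).
Proof.
move=> [z ->]; exists (k *: z); rewrite scalemxAl; congr (_ *m _).
by apply/matrixP => a b; rewrite !mxE intrM.
Qed.

Lemma inLat_sumX (B : {set 'I_n}) (t : 'I_n -> int) :
  inLat L (\sum_(i in B) (t i)%:~R *: X i).
Proof.
apply: (big_ind (inLat L)); [exact: inLat0|exact: inLatD|].
by move=> i _; apply: inLatZ.
Qed.

Let N := M *m invmx L.
Let Ks := \sum_j \sum_i `|N i j|.
Let K := Num.bound Ks.
Lemma KsK : Ks < K%:R.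
Proof. apply: archi_boundP; apply: sumr_ge0 => j _; apply: sumr_ge0 => i _; exact: normr_ge0. Qed.

Definition zf (f : {ffun 'I_n -> 'I_(K+K).+1}) : 'rV[int]_n :=
  \row_j ((f j : nat)%:Z - K%:Z).
Definition cand : seq 'rV[R]_n :=
  [seq map_mx fI (zf f) *m L | f <- enum {ffun 'I_n -> 'I_(K+K).+1}].

Lemma cand_lat x : x \in cand -> inLat L x.
Proof. by case/mapP => f _ ->; exists (zf f). Qed.

Lemma lat_cand x : inLat L x -> Zono X setT x -> x \in cand.
Proof.
move=> [z hx] /ZTP hc.
have e : map_mx fI z = coord x *m N.
  by rewrite /N mulmxA coordK hx mulmxK.
have hz : forall j, `|z 0 j| <= K%:Z.
  move=> j; rewrite -(ler_int R) intr_norm.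
  have -> : (z 0 j)%:~R = (coord x *m N) 0 j by rewrite -e mxE.
  rewrite mxE; apply: le_trans (ler_norm_sum _ _ _) _.
  apply: le_trans (ltW KsK).
  apply: (@le_trans _ _ (\sum_i `|N i j|)).
    apply: ler_sum => i _; rewrite normrM; apply: ler_piMl => //.
    by case/andP: (hc i) => a b; rewrite ger0_norm.
  rewrite /Ks [X in _ <= X](bigD1 j) //= lerDl; apply: sumr_ge0 => k _; apply: sumr_ge0 => i _.
  exact: normr_ge0.
pose f : {ffun 'I_n -> 'I_(K+K).+1} := [ffun j : 'I_n => inord (absz (z 0 j + K%:Z))].
apply/mapP; exists f; first by rewrite mem_enum.
rewrite hx; congr (_ *m _); apply/matrixP => a b; rewrite !mxE ffunE.
rewrite (ord1 a) inordK; last first.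
  have := hz b; rewrite ler_norml => /andP[h1 h2]; lia.
congr (_%:~R); have := hz b; rewrite ler_norml => /andP[h1 h2]; lia.
Qed.


Definition u := undup cand.
Definition Pset (B : {set 'I_n}) (x : 'rV[R]_n) : bool :=
  [forall i, if i \in B then (0 <= coord x 0 i) && (coord x 0 i < 1) else coord x 0 i == 0].
Definition Qset (B : {set 'I_n}) (x : 'rV[R]_n) : bool :=
  [forall i, if i \in B then (0 < coord x 0 i) && (coord x 0 i < 1) else coord x 0 i == 0].

Lemma int_small (k : int) : -1 < (k%:~R : R) -> (k%:~R : R) < 1 -> k = 0.
Proof.
move=> h1 h2; rewrite ltrz1 in h2.
have e : ((-1 : int)%:~R : R) = -1 by rewrite intrN.
rewrite -e ltr_int in h1; lia.
Qed.

Lemma m_index_P (B : {set 'I_n}) : m_index L X B (count (Pset B) u).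
Proof.
exists (filter (Pset B) u); split.
- exact: size_filter.
- exact/filter_uniq/undup_uniq.
- move=> x; rewrite mem_filter mem_undup => /andP[/forallP hP hx]; split.
    exact: cand_lat.
  by apply/realSpanP => i hi; move: (hP i); rewrite (negPf hi) => /eqP.
- move=> x y; rewrite !mem_filter => /andP[/forallP hx _] /andP[/forallP hy _] [t ht].
  apply: coord_inj; apply/rowP => i.
  have := congr1 (fun v => coord v 0 i) ht; rewrite /= coordB coord_sum !mxE.
  move: (hx i) (hy i); case: ifP => _.
    move=> /andP[a b] /andP[c d] e.
    have ti0 : t i = 0 by apply: int_small; rewrite -e; lra.
    by move: e; rewrite ti0 mulr0z => e; lra.
  by move=> /eqP -> /eqP ->.
- move=> g [hg /realSpanP hs].
  pose t := fun i => Num.floor (coord g 0 i).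
  pose x := g - \sum_(i in B) (t i)%:~R *: X i.
  have cx : forall i, coord x 0 i = coord g 0 i - (if i \in B then (t i)%:~R else 0).
    by move=> i; rewrite /x coordB (coord_sum B (fun i => (t i)%:~R)) !mxE.
  have hPx : forall i, if i \in B then (0 <= coord x 0 i) && (coord x 0 i < 1)
                      else coord x 0 i == 0.
    move=> i; rewrite cx; case: ifP => hi; rewrite hi.
      by have := floor_itv (coord g 0 i); rewrite intrD /t => /andP[a b]; apply/andP; split; lra.
    by rewrite hs ?hi // subr0.
  exists x.
    rewrite mem_filter mem_undup; apply/andP; split; first exact/forallP.
    apply: lat_cand; first by apply: inLatD => //; apply: inLatN; apply: inLat_sumX.
    apply/ZTP => i; move: (hPx i); case: ifP => _; first by move=> /andP[a b]; apply/andP; split; lra.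
    by move/eqP => ->; rewrite lexx ler01.
  by exists t; rewrite /x opprB addrC subrK.
Qed.

Lemma internal_list (A : {set 'I_n}) p :
  p \in filter (Qset A) u <-> inLat L p /\ internal X A p.
Proof.
rewrite mem_filter mem_undup; split.
  move=> /andP[/forallP hQ hp]; split; first exact: cand_lat.
  apply/internalP => i; have := hQ i.
  case: (boolP (i \in A)) => hi h.
    by split => // hn; rewrite hi in hn.
  by split => // _; apply/eqP.
move=> [hl /internalP hi]; apply/andP; split.
  apply/forallP => i; case: (hi i) => h1 h2; case: ifP => hA; first exact: h1.
  by rewrite h2 ?hA.
apply: lat_cand => //; apply/ZTP => i; case: (hi i) => h1 h2.
case: (boolP (i \in A)) => hA; first by case/andP: (h1 hA) => a b; apply/andP; split; lra.
by rewrite h2 // lexx ler01.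
Qed.


Lemma countE (T : eqType) (a : pred T) (s : seq T) :
  (count a s)%:Z = \sum_(x <- s) (nat_of_bool (a x))%:Z :> int.
Proof. by elim: s => [|x s IH]; rewrite ?big_nil ?big_cons //= PoszD IH. Qed.

Lemma elem_id (A : {set 'I_n}) x :
  (nat_of_bool (Qset A x))%:Z =
  \sum_(B : {set 'I_n} | B \subset A) (-1) ^+ (#|A| - #|B|)%N * (nat_of_bool (Pset B x))%:Z :> int.
Proof.
pose S := [set i | coord x 0 i != 0].
pose PT := [forall i, (0 <= coord x 0 i) && (coord x 0 i < 1)].
have eP : forall B, Pset B x = (S \subset B) && PT.
  move=> B; apply/forallP/andP.
    move=> h; split.
      apply/subsetP => i; rewrite inE => hi; have := h i.
      case: (boolP (i \in B)) => hB //= /eqP hc; by rewrite hc eqxx in hi.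
    apply/forallP => i; have := h i; case: (boolP (i \in B)) => hB //= /eqP ->.
    by rewrite lexx ltr01.
  move=> [/subsetP hS /forallP hP] i; case: (boolP (i \in B)) => hi /=; first exact: hP.
  apply/negbNE/negP => hc; have := hS i; rewrite inE => /(_ hc).
  by rewrite (negPf hi).
have eQ : Qset A x = (S == A) && PT.
  apply/forallP/andP.
    move=> h; split.
      apply/eqP/setP => i; rewrite inE; have := h i.
      case: (boolP (i \in A)) => hA /=.
        by case/andP => h1 _; rewrite gt_eqF.
      by move/eqP => ->; rewrite eqxx.
    apply/forallP => i; have := h i; case: (boolP (i \in A)) => hA /=.
      by case/andP => h1 h2; rewrite ltW.
    by move/eqP => ->; rewrite lexx ltr01.
  move=> [/eqP hS /forallP hP] i; case: (boolP (i \in A)) => hi /=.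
    have := hi; rewrite -hS inE => hc; case/andP: (hP i) => h1 h2.
    by rewrite h2 andbT lt_neqAle eq_sym hc h1.
  apply/negbNE/negP => hc; move: hi; rewrite -hS inE.
  by rewrite hc.
rewrite eQ; under eq_bigr => B _ do rewrite eP.
case: (boolP PT) => hPT.
  rewrite andbT; under eq_bigr => B _ do rewrite andbT.
  rewrite -(@sgn_sum _ S A) big_mkcondr /=; apply: eq_bigr => B _.
  by case: (S \subset B) => /=; rewrite ?mulr1 ?mulr0.
rewrite andbF big1 // => B _; by rewrite andbF mulr0.
Qed.

Lemma main (A : {set 'I_n}) :
  exists (m : {set 'I_n} -> nat) (s : seq 'rV[R]_n),
    [/\ (forall B, m_index L X B (m B)),
        uniq s,
        (forall p, p \in s <-> (inLat L p /\ internal X A p)) &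
        (size s)%:Z = \sum_(B : {set 'I_n} | B \subset A)
                        (-1) ^+ (#|A| - #|B|) * (m B)%:Z].
Proof.
exists (fun B => count (Pset B) u), (filter (Qset A) u); split.
- exact: m_index_P.
- exact/filter_uniq/undup_uniq.
- exact: internal_list.
rewrite size_filter countE.
apply/esym; under eq_bigr => B _ do rewrite (@countE _ (Pset B) u) mulr_sumr.
rewrite exchange_big /=; apply: eq_bigr => x _; symmetry; exact: elem_id.
Qed.

End Aux.

Theorem lemma4p3 (R : realType) (n : nat) (L : 'M[R]_n) (X : 'I_n -> 'rV[R]_n) :
  L \in unitmx ->
  (forall i, inLat L (X i)) ->
  row_free (\matrix_(i < n) X i) ->
  forall A : {set 'I_n},
  exists (m : {set 'I_n} -> nat) (s : seq 'rV[R]_n),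
    [/\ (forall B, m_index L X B (m B)),
        uniq s,
        (forall p, p \in s <-> (inLat L p /\ internal X A p)) &
        (size s)%:Z = \sum_(B : {set 'I_n} | B \subset A)
                        (-1) ^+ (#|A| - #|B|) * (m B)%:Z].
Proof.
move=> HL HX HM A; exact: main.
Qed.
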